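(* Let $X \subset \mathbb{Z}^2$ and let $V_1,\dots,V_n \subset X$ be thick convex digital disks. Let $X'=\bigcup_{i=1}^n V_i$. For each $i$ let $C_i$ be a bounding curve of $V_i$, let $A_{1,i}$ be the set of endpoints of maximal horizontal or maximal vertical line segments contained in $C_i$, and let $A_{2,i}$ be the union of the maximal slanted line segments contained in $C_i$. Then $$A=(X\setminus X')\cup\bigcup_{i=1}^n (A_{1,i}\cup A_{2,i})$$ is a freezing set for $(X,c_1)$.
   Context: Adjacencies: for $x\neq y$ in $\mathbb{Z}^2$, $x,y$ are $c_1$-adjacent if they differ by 1 in exactly one coordinate and agree in the other; $c_2$-adjacent if each coordinate differs by at most 1. Write $x\leftrightarrow_\kappa y$ for $\kappa$-adjacency. A $\kappa$-path is a finite sequence of points with consecutive points equal or $\kappa$-adjacent. A function $f:(X,\kappa)\to(X,\kappa)$ is $\kappa$-continuous ($f\in C(X,\kappa)$) if $x\leftrightarrow_\kappa x'$ implies $f(x)=f(x')$ or $f(x)\leftrightarrow_\kappa f(x')$. $\mathrm{Fix}(f)=\{x: f(x)=x\}$. A set $A\subset X$ is a freezing set for $(X,\kappa)$ if every $f\in C(X,\kappa)$ with $A\subset \mathrm{Fix}(f)$ satisfies $f=\mathrm{id}_X$; it is minimal if no proper subset of $A$ is a freezing set. A (digital) line segment is a $c_2$-connected set of collinear points of $\mathbb{Z}^2$; it is necessarily horizontal, vertical, or of slope $\pm1$ (called slanted). A $c_2$-closed curve is a $c_2$-path $s_0,\dots,s_{m-1}$ with $s_0=s_{m-1}$ and $s_i\ne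 s_j$ for $0<|i-j|<m-1$. If $S$ is a $c_2$-closed curve such that $\mathbb{Z}^2\setminus S$ has exactly two $c_1$-components, one finite and one infinite, the union $D$ of $S$ and the finite component is a digital disk, $S$ is a bounding curve of $D$, and the finite component is the interior $Int(S)$ (also written $Int(X)$). $Bd_2(X)=\{x\in X : \exists y\in\mathbb{Z}^2\setminus X,\ y\leftrightarrow_{c_2}x\}$. A digital disk $X$ is thick if for some bounding curve $S$ of $X$: (i) for every slanted segment $T$ of $Bd_2(X)$ and every non-endpoint $p\in T$ there is $c\in X$ with $c\leftrightarrow_{c_2}p$ but $c$ not $c_1$-adjacent to $p$ (i.e. $c$ is diagonally adjacent to $p$) on the interior side; (ii) if $p$ is the vertex of a $90^\circ$ interior angle $\theta$ of $S$, there is $q\in Int(X)$ such that, if $\theta$ has horizontal and vertical sides, $q\leftrightarrow_{c_2}p$ and $q$ is not $c_1$-adjacent to $p$, and if $\theta$ has slanted sides, $q\leftrightarrow_{c_1}p$; (iii) if $p$ is the vertex of a $135^\circ$ interior angle $\theta$ of $S$, there are $b,b'\in X$ in the interior of $\theta$ with $b\leftrightarrow_{c_2}p$, $b$ not $c_1$-adjacent to $p$, and $b'\leftrightarrow_{c_1}p$. A set $X\subset\mathbb{Z}^2$ is (digitally) convex if $X$ equals the set of integer points of its Euclidean convex hull. *)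

(* Defs.v *)
From Stdlib Require Import ZArith Reals List Lia Lra.
Import ListNotations.

Definition pt : Type := (Z * Z)%type.

Definition padd (p q : pt) : pt := (fst p + fst q, snd p + snd q)%Z.
Definition psub (p q : pt) : pt := (fst p - fst q, snd p - snd q)%Z.
Definition pscale (t : Z) (p : pt) : pt := (t * fst p, t * snd p)%Z.

Definition c1adj (x y : pt) : Prop :=
  (Z.abs (fst x - fst y) + Z.abs (snd x - snd y) = 1)%Z.
Definition c2adj (x y : pt) : Prop :=
  x <> y /\ (Z.abs (fst x - fst y) <= 1)%Z /\ (Z.abs (snd x - snd y) <= 1)%Z.
Definition diagadj (x y : pt) : Prop := c2adj x y /\ ~ c1adj x y.

Definition dcontinuous (X : pt -> Prop) (k : pt -> pt -> Prop) (f : pt -> pt) : Prop :=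
  (forall x, X x -> X (f x)) /\
  (forall x y, X x -> X y -> k x y -> f x = f y \/ k (f x) (f y)).

Definition freezing_set (X : pt -> Prop) (k : pt -> pt -> Prop) (A : pt -> Prop) : Prop :=
  (forall a, A a -> X a) /\
  forall f, dcontinuous X k f -> (forall a, A a -> f a = a) -> forall x, X x -> f x = x.

Inductive kpath (k : pt -> pt -> Prop) (Y : pt -> Prop) : pt -> pt -> Prop :=
| kpath_refl x : Y x -> kpath k Y x x
| kpath_step x y z : Y x -> (x = y \/ k x y) -> kpath k Y y z -> kpath k Y x z.

Definition finite_set (P : pt -> Prop) : Prop := exists l : list pt, forall p, P p -> In p l.

Definition nthp (s : list pt) (i : nat) : pt := nth i s (0%Z, 0%Z).

Definition closed_curve (s : list pt) : Prop :=
  let m := length s in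
  (1 <= m)%nat /\
  nthp s 0 = nthp s (m - 1) /\
  (forall i, (S i < m)%nat -> nthp s i = nthp s (S i) \/ c2adj (nthp s i) (nthp s (S i))) /\
  (forall i j, (i < j)%nat -> (j < m)%nat -> (j - i < m - 1)%nat -> nthp s i <> nthp s j).

Definition curve_pts (s : list pt) (p : pt) : Prop := In p s.
Definition compl_curve (s : list pt) (p : pt) : Prop := ~ In p s.

(* Z^2 \ S has exactly two c1-components: the one of a (finite) and of b (infinite) *)
Definition two_components (s : list pt) (a b : pt) : Prop :=
  compl_curve s a /\ compl_curve s b /\
  ~ kpath c1adj (compl_curve s) a b /\
  (forall y, compl_curve s y -> kpath c1adj (compl_curve s) a y \/ kpath c1adj (compl_curve s) b y) /\
  finite_set (kpath c1adj (compl_curve s) a) /\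
  ~ finite_set (kpath c1adj (compl_curve s) b).

Definition interior (s : list pt) (p : pt) : Prop :=
  exists a b, two_components s a b /\ kpath c1adj (compl_curve s) a p.

Definition bounding_curve (D : pt -> Prop) (s : list pt) : Prop :=
  closed_curve s /\
  exists a b, two_components s a b /\
    forall p, D p <-> (curve_pts s p \/ kpath c1adj (compl_curve s) a p).

Definition digital_disk (D : pt -> Prop) : Prop := exists s, bounding_curve D s.

Definition Bd2 (X : pt -> Prop) (x : pt) : Prop := X x /\ exists y, ~ X y /\ c2adj y x.

Definition hv_dir (d : pt) : Prop := d = (1%Z, 0%Z) \/ d = (0%Z, 1%Z).
Definition slanted_dir (d : pt) : Prop := d = (1%Z, 1%Z) \/ d = (1%Z, (-1)%Z).

Definition seg_in (Y : pt -> Prop) (p d : pt) (k : Z) : Prop :=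
  (1 <= k)%Z /\ forall t, (0 <= t <= k)%Z -> Y (padd p (pscale t d)).

Definition maximal_seg_in (Y : pt -> Prop) (p d : pt) (k : Z) : Prop :=
  seg_in Y p d k /\ ~ Y (psub p d) /\ ~ Y (padd p (pscale (k + 1) d)).

Definition A1set (s : list pt) (q : pt) : Prop :=
  exists p d k, hv_dir d /\ maximal_seg_in (curve_pts s) p d k /\
    (q = p \/ q = padd p (pscale k d)).

Definition A2set (s : list pt) (q : pt) : Prop :=
  exists p d k, slanted_dir d /\ maximal_seg_in (curve_pts s) p d k /\
    exists t, (0 <= t <= k)%Z /\ q = padd p (pscale t d).

(** Directions in units of 45 degrees, counterclockwise from (1,0) *)
Definition unitv (z : Z) : pt :=
  let r := Z.modulo z 8 in
  if Z.eqb r 0 then (1, 0)%Z else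
  if Z.eqb r 1 then (1, 1)%Z else
  if Z.eqb r 2 then (0, 1)%Z else
  if Z.eqb r 3 then ((-1), 1)%Z else
  if Z.eqb r 4 then ((-1), 0)%Z else
  if Z.eqb r 5 then ((-1), (-1))%Z else
  if Z.eqb r 6 then (0, (-1))%Z else (1, (-1))%Z.

(** Vertices of the closed curve: indices j < m-1, cyclic neighbours *)
Definition ncurve (s : list pt) : nat := (length s - 1)%nat.
Definition cnext (s : list pt) (j : nat) : pt := nthp s (S j).
Definition cprev (s : list pt) (j : nat) : pt :=
  if Nat.eqb j 0 then nthp s (ncurve s - 1) else nthp s (j - 1).

Definition cross (p q : pt) : Z := (fst p * snd q - snd p * fst q)%Z.
(* twice the signed (shoelace) area of the closed polygon *)
Definition signed_area2 (s : list pt) : Z :=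
  fold_right (fun i acc => (cross (nthp s i) (nthp s (S i)) + acc)%Z) 0%Z (seq 0 (ncurve s)).
(* +1 if counterclockwise (interior on the left), -1 otherwise *)
Definition orient (s : list pt) : Z := if Z.ltb 0 (signed_area2 s) then 1%Z else (-1)%Z.

(* At vertex j, with outgoing side direction db, the interior angle is
   k*45 degrees (1 <= k <= 7): the incoming side direction is obtained by
   rotating db by k*45 degrees towards the interior. *)
Definition interior_angle (s : list pt) (j : nat) (db k : Z) : Prop :=
  (1 <= k <= 7)%Z /\
  psub (cnext s j) (nthp s j) = unitv db /\
  psub (cprev s j) (nthp s j) = unitv (db + orient s * k).

Definition in_angle_dir (s : list pt) (db k u : Z) (e : pt) : Prop :=
  (0 < u < k)%Z /\ e = unitv (db + orient s * u).

Definition thick_cond_i (D : pt -> Prop) : Prop :=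
  forall p0 d k t, slanted_dir d -> seg_in (Bd2 D) p0 d k -> (0 < t < k)%Z ->
    let p := padd p0 (pscale t d) in
    exists c, D c /\ diagadj c p /\ c <> padd p d /\ c <> psub p d.

Definition thick_cond_ii (s : list pt) : Prop :=
  forall j db, (j < ncurve s)%nat -> interior_angle s j db 2 ->
    let p := nthp s j in
    if Z.even db
    then exists q, interior s q /\ diagadj q p
    else exists q, interior s q /\ c1adj q p.

Definition thick_cond_iii (D : pt -> Prop) (s : list pt) : Prop :=
  forall j db, (j < ncurve s)%nat -> interior_angle s j db 3 ->
    let p := nthp s j in
    exists b b' u u', D b /\ D b' /\
      in_angle_dir s db 3 u (psub b p) /\ diagadj b p /\
      in_angle_dir s db 3 u' (psub b' p) /\ c1adj b' p.

Definition thick (D : pt -> Prop) : Prop :=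
  digital_disk D /\
  exists s, bounding_curve D s /\ thick_cond_i D /\ thick_cond_ii s /\ thick_cond_iii D s.

(** Digital convexity: X = integer points of its Euclidean convex hull *)
Definition in_convex_hull (X : pt -> Prop) (p : pt) : Prop :=
  exists l : list (R * pt),
    Forall (fun rq => (0 <= fst rq)%R /\ X (snd rq)) l /\
    fold_right (fun rq acc => (fst rq + acc)%R) 0%R l = 1%R /\
    fold_right (fun rq acc => (fst rq * IZR (fst (snd rq)) + acc)%R) 0%R l = IZR (fst p) /\
    fold_right (fun rq acc => (fst rq * IZR (snd (snd rq)) + acc)%R) 0%R l = IZR (snd p).

Definition digitally_convex (X : pt -> Prop) : Prop :=
  forall p, X p <-> in_convex_hull X p.

(* Main.v *)
Require Import Defs.
From Stdlib Require Import ZArith List.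
From Stdlib Require Import Lia Classical.
Import ListNotations.

Local Open Scope Z_scope.

Definition dist (p q : pt) : Z := Z.abs (fst p - fst q) + Z.abs (snd p - snd q).

Definition sumdist (l : list pt) (p : pt) : Z :=
  fold_right (fun q acc => dist q p + acc) 0 l.

Lemma sumdist_nonneg l p : 0 <= sumdist l p.
Proof.
  induction l; simpl; [lia|]. unfold dist at 1.
  pose proof (Z.abs_nonneg (fst a - fst p)); pose proof (Z.abs_nonneg (snd a - snd p)); lia.
Qed.

Lemma sumdist_bound l p q : In q l -> dist q p <= sumdist l p.
Proof.
  induction l; simpl; [tauto|]. intros [->|H].
  - pose proof (sumdist_nonneg l p); lia.
  - specialize (IHl H). unfold dist at 2.
    pose proof (Z.abs_nonneg (fst a - fst p)); pose proof (Z.abs_nonneg (snd a - snd p)); lia.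
Qed.

Lemma padd_zero p d : padd p (pscale 0 d) = p.
Proof. destruct p, d; unfold padd, pscale; simpl; f_equal; ring. Qed.

Lemma padd_scale p a b d : padd (padd p (pscale a d)) (pscale b d) = padd p (pscale (a + b) d).
Proof. destruct p, d; unfold padd, pscale; simpl; f_equal; ring. Qed.

Lemma psub_scale p a d : psub (padd p (pscale a d)) d = padd p (pscale (a - 1) d).
Proof. destruct p, d; unfold padd, psub, pscale; simpl; f_equal; ring. Qed.

Lemma ray_bound (Y : pt -> Prop) l p d :
  (Z.abs (fst d) = 1 \/ Z.abs (snd d) = 1) -> (forall q, Y q -> In q l) ->
  forall t, Y (padd p (pscale t d)) -> Z.abs t <= sumdist l p.
Proof.
  intros Hd Hl t HY. pose proof (sumdist_bound _ p _ (Hl _ HY)) as H.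
  unfold dist, padd, pscale in H; simpl in H.
  replace (fst p + t * fst d - fst p) with (t * fst d) in H by ring.
  replace (snd p + t * snd d - snd p) with (t * snd d) in H by ring.
  rewrite !Z.abs_mul in H.
  pose proof (Z.abs_nonneg t). pose proof (Z.abs_nonneg (fst d)). pose proof (Z.abs_nonneg (snd d)).
  destruct Hd as [E|E]; rewrite E in H; nia.
Qed.

Lemma run_up (P : Z -> Prop) B (HB : forall t, P t -> t <= B) :
  forall N : nat, forall h, B - h <= Z.of_nat N -> P h ->
  exists hi, h <= hi /\ (forall t, h <= t <= hi -> P t) /\ ~ P (hi + 1).
Proof.
  induction N; intros h Hh Ph; destruct (classic (P (h + 1))) as [H1|H1].
  - specialize (HB _ H1). lia.
  - exists h. split; [lia|]. split; auto. intros t Ht. replace t with h by lia. auto.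
  - destruct (IHN (h + 1)) as [hi [E1 [E2 E3]]]; auto. lia.
    exists hi. split; [lia|]. split; auto. intros t Ht.
    destruct (Z.eq_dec t h); [subst; auto|]. apply E2; lia.
  - exists h. split; [lia|]. split; auto. intros t Ht. replace t with h by lia. auto.
Qed.

Lemma max_run (Y : pt -> Prop) p d B :
  (forall t, Y (padd p (pscale t d)) -> Z.abs t <= B) -> Y p ->
  exists lo hi, lo <= 0 <= hi /\ (forall t, lo <= t <= hi -> Y (padd p (pscale t d))) /\
    ~ Y (padd p (pscale (lo - 1) d)) /\ ~ Y (padd p (pscale (hi + 1) d)).
Proof.
  intros HB Hp.
  assert (P0 : Y (padd p (pscale 0 d))) by (rewrite padd_zero; auto).
  destruct (run_up (fun t => Y (padd p (pscale t d))) B) with (N := Z.to_nat (B - 0)) (h := 0)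
    as [hi [H1 [H2 H3]]]; auto.
  { intros t Ht. specialize (HB t Ht). lia. }
  { lia. }
  destruct (run_up (fun t => Y (padd p (pscale (- t) d))) B) with (N := Z.to_nat (B - 0)) (h := 0)
    as [hi' [G1 [G2 G3]]]; auto.
  { intros t Ht. specialize (HB _ Ht). lia. }
  { lia. }
  exists (- hi'), hi. split; [lia|]. split; [|split; auto].
  - intros t Ht. destruct (Z_le_dec 0 t).
    + apply H2; lia.
    + replace t with (- (- t)) by lia. apply G2; lia.
  - replace (- hi' - 1) with (- (hi' + 1)) by lia. auto.
Qed.

Lemma cont_step X f x y : dcontinuous X c1adj f -> X x -> X y -> c1adj x y ->
  dist (f x) (f y) <= 1.
Proof.
  intros [_ Hc] Hx Hy Ha. destruct (Hc x y Hx Hy Ha) as [E|E].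
  - rewrite E; unfold dist; lia.
  - unfold c1adj in E; unfold dist; lia.
Qed.

Lemma hv_adj p0 d t : hv_dir d -> c1adj (padd p0 (pscale (t + 1) d)) (padd p0 (pscale t d)).
Proof. intros [-> | ->]; unfold c1adj, padd, pscale; simpl; lia. Qed.

Lemma line_dist X f p0 d : dcontinuous X c1adj f -> hv_dir d ->
  forall n : nat, forall t1, (forall u, t1 <= u <= t1 + Z.of_nat n -> X (padd p0 (pscale u d))) ->
  dist (f (padd p0 (pscale (t1 + Z.of_nat n) d))) (f (padd p0 (pscale t1 d))) <= Z.of_nat n.
Proof.
  intros Hf Hd. induction n; intros t1 HX.
  - simpl. rewrite Z.add_0_r. unfold dist; lia.
  - rewrite Nat2Z.inj_succ. replace (t1 + Z.succ (Z.of_nat n)) with ((t1 + Z.of_nat n) + 1) by lia.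
    pose proof (IHn t1 (fun u Hu => HX u ltac:(lia))) as IH.
    pose proof (cont_step X f _ _ Hf (HX (t1 + Z.of_nat n + 1) ltac:(lia))
      (HX (t1 + Z.of_nat n) ltac:(lia)) (hv_adj p0 d _ Hd)) as S.
    unfold dist in *; lia.
Qed.

Lemma row_fix X f p0 d lo hi : dcontinuous X c1adj f -> hv_dir d ->
  (forall u, lo <= u <= hi -> X (padd p0 (pscale u d))) ->
  f (padd p0 (pscale lo d)) = padd p0 (pscale lo d) ->
  f (padd p0 (pscale hi d)) = padd p0 (pscale hi d) ->
  forall t, lo <= t <= hi -> f (padd p0 (pscale t d)) = padd p0 (pscale t d).
Proof.
  intros Hf Hd HX El Eh t Ht.
  pose proof (line_dist X f p0 d Hf Hd (Z.to_nat (t - lo)) lo) as D1.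
  rewrite Z2Nat.id in D1 by lia. replace (lo + (t - lo)) with t in D1 by lia.
  specialize (D1 (fun u Hu => HX u ltac:(lia))).
  pose proof (line_dist X f p0 d Hf Hd (Z.to_nat (hi - t)) t) as D2.
  rewrite Z2Nat.id in D2 by lia. replace (t + (hi - t)) with hi in D2 by lia.
  specialize (D2 (fun u Hu => HX u ltac:(lia))).
  rewrite El in D1. rewrite Eh in D2.
  destruct (f (padd p0 (pscale t d))) as [y1 y2].
  destruct p0 as [a1 a2].
  destruct Hd as [-> | ->]; unfold dist, padd, pscale in *; simpl in *; f_equal; lia.
Qed.

Lemma neighbor_dir p q : c2adj p q -> exists d t,
  (d = (1, 0) \/ d = (0, 1) \/ d = (1, 1) \/ d = (1, -1)) /\ (t = 1 \/ t = -1) /\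
  q = padd p (pscale t d).
Proof.
  destruct p as [p1 p2], q as [q1 q2]; unfold c2adj; simpl; intros [Hne [H1 H2]].
  assert (A : q1 - p1 = -1 \/ q1 - p1 = 0 \/ q1 - p1 = 1) by lia.
  assert (B : q2 - p2 = -1 \/ q2 - p2 = 0 \/ q2 - p2 = 1) by lia.
  destruct A as [A|[A|A]]; destruct B as [B|[B|B]];
  first [ exfalso; apply Hne; f_equal; lia
        | exists (1,0), 1; split; [tauto|split; [tauto|]]; unfold padd, pscale; simpl; f_equal; lia
        | exists (1,0), (-1); split; [tauto|split; [tauto|]]; unfold padd, pscale; simpl; f_equal; lia
        | exists (0,1), 1; split; [tauto|split; [tauto|]]; unfold padd, pscale; simpl; f_equal; lia
        | exists (0,1), (-1); split; [tauto|split; [tauto|]]; unfold padd, pscale; simpl; f_equal; lia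
        | exists (1,1), 1; split; [tauto|split; [tauto|]]; unfold padd, pscale; simpl; f_equal; lia
        | exists (1,1), (-1); split; [tauto|split; [tauto|]]; unfold padd, pscale; simpl; f_equal; lia
        | exists (1,-1), 1; split; [tauto|split; [tauto|]]; unfold padd, pscale; simpl; f_equal; lia
        | exists (1,-1), (-1); split; [tauto|split; [tauto|]]; unfold padd, pscale; simpl; f_equal; lia ].
Qed.

Lemma kpath_app k Y x y z : kpath k Y x y -> Y z -> (y = z \/ k y z) -> kpath k Y x z.
Proof.
  induction 1; intros Hz Hyz.
  - apply kpath_step with z; auto. apply kpath_refl; auto.
  - apply kpath_step with y; auto.
Qed.

Lemma ray_path s a p e : (e = (1, 0) \/ e = (-1, 0)) -> (forall q, In q s -> q = p) ->
  ~ In a s -> (forall t, 0 <= t -> padd a (pscale t e) <> p) ->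
  forall n : nat, kpath c1adj (compl_curve s) a (padd a (pscale (Z.of_nat n) e)).
Proof.
  intros He Hs Ha Hr. induction n.
  - simpl. rewrite padd_zero. apply kpath_refl. exact Ha.
  - apply kpath_app with (padd a (pscale (Z.of_nat n) e)); auto.
    + intro H. apply (Hr (Z.of_nat (S n))); [lia|]. apply Hs; auto.
    + right. rewrite Nat2Z.inj_succ. destruct a as [a1 a2].
      destruct He as [-> | ->]; unfold c1adj, padd, pscale; simpl; lia.
Qed.

Lemma single_contra s p a b : (forall q, In q s -> q = p) -> In p s -> two_components s a b -> False.
Proof.
  intros Hs Hp [Ha [_ [_ [_ [[l Hl] _]]]]].
  assert (Hne : a <> p) by (intro E; subst; auto).
  assert (Hray : exists e, (e = (1, 0) \/ e = (-1, 0)) /\ forall t, 0 <= t -> padd a (pscale t e) <> p).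
  { destruct (classic (exists t, 0 <= t /\ padd a (pscale t (1, 0)) = p)) as [[t1 [T1 E1]]|N].
    - exists (-1, 0). split; [tauto|]. intros t2 T2 E2. apply Hne. rewrite <- E1 in E2.
      destruct a as [a1 a2]; unfold padd, pscale in *; simpl in *. injection E2; intros.
      assert (t1 = 0) by lia. subst. f_equal; lia.
    - exists (1, 0). split; [tauto|]. intros t T E. apply N. eauto. }
  destruct Hray as [e [He Hr]].
  pose proof (ray_path s a p e He Hs Ha Hr) as Hpath.
  assert (Hb : forall t, kpath c1adj (compl_curve s) a (padd a (pscale t e)) -> Z.abs t <= sumdist l a).
  { intros t Ht. apply (ray_bound (kpath c1adj (compl_curve s) a) l a e); auto.
    destruct He as [-> | ->]; simpl; auto. }
  pose (N := (Z.to_nat (sumdist l a) + 1)%nat).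
  specialize (Hb _ (Hpath N)). unfold N in Hb. pose proof (sumdist_nonneg l a). lia.
Qed.

Lemma curve_has_neighbor s a b p : closed_curve s -> two_components s a b -> In p s ->
  exists q, In q s /\ c2adj p q.
Proof.
  intros [Hm [H0 [Hstep Hdist]]] Htc Hp.
  apply NNPP; intro Hno.
  assert (Hno' : forall q, In q s -> ~ c2adj p q) by (intros q Hq Hc; apply Hno; eauto).
  destruct (In_nth s p (0, 0) Hp) as [i [Hi Ei]].
  destruct (Nat.le_gt_cases 3 (length s)) as [Hm3|Hm3].
  - set (i' := if Nat.eqb i (length s - 1) then 0%nat else i).
    assert (Ei' : nthp s i' = p).
    { unfold i'. destruct (Nat.eqb_spec i (length s - 1)).
      - rewrite H0. rewrite <- e. exact Ei.
      - exact Ei. }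
    assert (Hi' : (S i' < length s)%nat).
    { unfold i'. destruct (Nat.eqb_spec i (length s - 1)); lia. }
    destruct (Hstep i' Hi') as [E|E].
    + apply (Hdist i' (S i')); try lia. exact E.
    + rewrite Ei' in E. apply (Hno' _ (nth_In s (0, 0) Hi') E).
  - apply (single_contra s p a b); auto.
    destruct s as [|x [|y [|z r]]]; simpl in *; try lia.
    + intros q [->|[]]. destruct Hp as [->|[]]; auto.
    + unfold nthp in H0; simpl in H0. subst y.
      intros q Hq. destruct Hq as [->|[->|[]]]; destruct Hp as [->|[->|[]]]; auto.
Qed.

Lemma build_seg (Y : pt -> Prop) p d lo hi :
  (forall t, lo <= t <= hi -> Y (padd p (pscale t d))) ->
  ~ Y (padd p (pscale (lo - 1) d)) -> ~ Y (padd p (pscale (hi + 1) d)) -> 1 <= hi - lo ->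
  maximal_seg_in Y (padd p (pscale lo d)) d (hi - lo).
Proof.
  intros H1 H2 H3 H4. split; [split; auto|split].
  - intros t Ht. rewrite padd_scale. apply H1; lia.
  - rewrite psub_scale. auto.
  - rewrite padd_scale. replace (lo + (hi - lo + 1)) with (hi + 1) by lia. auto.
Qed.

Section Main.
Variables (X : pt -> Prop) (n : nat) (V : nat -> pt -> Prop) (C : nat -> list pt).
Hypothesis HV : forall i, (i < n)%nat ->
     (forall p, V i p -> X p) /\ thick (V i) /\ digitally_convex (V i) /\
     bounding_curve (V i) (C i).
Variable f : pt -> pt.
Hypothesis Hf : dcontinuous X c1adj f.
Hypothesis HA : forall a, ((X a /\ ~ (exists i, (i < n)%nat /\ V i a)) \/
              (exists i, (i < n)%nat /\ (A1set (C i) a \/ A2set (C i) a))) -> f a = a.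

Lemma curve_X i : (i < n)%nat -> forall q, In q (C i) -> X q.
Proof.
  intros Hi q Hq. destruct (HV i Hi) as [HVX [_ [_ [_ [a [b [_ Hiff]]]]]]].
  apply HVX. apply Hiff. left. exact Hq.
Qed.

Lemma curve_fixed i : (i < n)%nat -> forall p, In p (C i) -> f p = p.
Proof.
  intros Hi p Hp. destruct (HV i Hi) as [HVX [_ [_ [Hcl [a [b [Htc Hiff]]]]]]].
  destruct (curve_has_neighbor (C i) a b p Hcl Htc Hp) as [q [Hq Hc]].
  destruct (neighbor_dir p q Hc) as [d [t [Hd [Ht Eq]]]]. subst q.
  assert (Hd1 : Z.abs (fst d) = 1 \/ Z.abs (snd d) = 1)
    by (destruct Hd as [->|[->|[->| ->]]]; simpl; auto).
  destruct (max_run (curve_pts (C i)) p d (sumdist (C i) p)) as [lo [hi [L1 [L2 [L3 L4]]]]].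
  { intros t0 Ht0. apply (ray_bound (curve_pts (C i)) (C i) p d Hd1); auto. }
  { exact Hp. }
  assert (Hk : 1 <= hi - lo).
  { destruct (Z_le_dec 1 hi); [lia|]. destruct (Z_le_dec lo (-1)); [lia|].
    exfalso. destruct Ht as [->| ->].
    - apply L4. replace (hi + 1) with 1 by lia. exact Hq.
    - apply L3. replace (lo - 1) with (-1) by lia. exact Hq. }
  pose proof (build_seg (curve_pts (C i)) p d lo hi L2 L3 L4 Hk) as Hseg.
  destruct Hd as [Hd|[Hd|Hd]].
  -
    rewrite <- (padd_zero p d).
    apply (row_fix X f p d lo hi Hf ltac:(left; exact Hd)); try lia.
    + intros u Hu. apply (curve_X i Hi). apply L2; auto.
    + apply HA. right. exists i. split; auto. left.
      exists (padd p (pscale lo d)), d, (hi - lo). split; [left; exact Hd|]. split; auto.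
    + apply HA. right. exists i. split; auto. left.
      exists (padd p (pscale lo d)), d, (hi - lo). split; [left; exact Hd|]. split; auto.
      right. rewrite padd_scale. f_equal. f_equal. lia.
  - rewrite <- (padd_zero p d).
    apply (row_fix X f p d lo hi Hf ltac:(right; exact Hd)); try lia.
    + intros u Hu. apply (curve_X i Hi). apply L2; auto.
    + apply HA. right. exists i. split; auto. left.
      exists (padd p (pscale lo d)), d, (hi - lo). split; [right; exact Hd|]. split; auto.
    + apply HA. right. exists i. split; auto. left.
      exists (padd p (pscale lo d)), d, (hi - lo). split; [right; exact Hd|]. split; auto.
      right. rewrite padd_scale. f_equal. f_equal. lia.
  - apply HA. right. exists i. split; auto. right.
    exists (padd p (pscale lo d)), d, (hi - lo). split; [unfold slanted_dir; tauto|]. split; auto.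
    exists (- lo). split; [lia|]. rewrite padd_scale. replace (lo + - lo) with 0 by lia.
    rewrite padd_zero. reflexivity.
Qed.

Lemma K_neighbor s a y z : kpath c1adj (compl_curve s) a y -> c1adj y z ->
  In z s \/ kpath c1adj (compl_curve s) a z.
Proof.
  intros Hy Hyz. destruct (classic (In z s)) as [H|H]; [left; auto|right].
  apply kpath_app with y; auto.
Qed.

Lemma V_fixed i : (i < n)%nat -> forall x, V i x -> f x = x.
Proof.
  intros Hi x Hx. destruct (HV i Hi) as [HVX [_ [_ [Hcl [a [b [Htc Hiff]]]]]]].
  destruct Htc as [Ha' [Hb' [Hab [Hcomp [[lK HlK] Hinf]]]]].
  set (d := (1, 0) : pt).
  assert (Hfin : forall q, V i q -> In q (C i ++ lK)).
  { intros q Hq. apply in_or_app. apply Hiff in Hq. destruct Hq as [Hq|Hq]; auto. }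
  destruct (max_run (V i) x d (sumdist (C i ++ lK) x)) as [lo [hi [L1 [L2 [L3 L4]]]]].
  { intros t0 Ht0. apply (ray_bound (V i) (C i ++ lK) x d); auto. }
  { exact Hx. }
  assert (Hend : forall t e, V i (padd x (pscale t d)) -> ~ V i (padd x (pscale (t + e) d)) ->
            (e = 1 \/ e = -1) -> In (padd x (pscale t d)) (C i)).
  { intros t e H1 H2 He. apply Hiff in H1. destruct H1 as [H1|H1]; auto. exfalso. apply H2.
    apply Hiff. apply (K_neighbor (C i) a _ _ H1).
    destruct x; unfold d, c1adj, padd, pscale; simpl; lia. }
  rewrite <- (padd_zero x d).
  apply (row_fix X f x d lo hi Hf ltac:(left; reflexivity)); try lia.
  - intros u Hu. apply HVX. apply L2; auto.
  - apply (curve_fixed i Hi). apply (Hend lo (-1)); [apply L2; lia| |auto].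
    replace (lo + -1) with (lo - 1) by lia. auto.
  - apply (curve_fixed i Hi). apply (Hend hi 1); [apply L2; lia|auto|auto].
Qed.

End Main.

Theorem mainTheorem2 (X : pt -> Prop) (n : nat) (V : nat -> pt -> Prop) (C : nat -> list pt) :
  (forall i, (i < n)%nat ->
     (forall p, V i p -> X p) /\ thick (V i) /\ digitally_convex (V i) /\
     bounding_curve (V i) (C i)) ->
  freezing_set X c1adj
    (fun p => (X p /\ ~ (exists i, (i < n)%nat /\ V i p)) \/
              (exists i, (i < n)%nat /\ (A1set (C i) p \/ A2set (C i) p))).
Proof.
  intros HV. split.
  - intros p [[Hx _]|[i [Hi [A1|A2]]]]; auto.
    + destruct A1 as [p' [d [k [_ [[[Hk Hseg] _] Hq]]]]].
      apply (curve_X X n V C HV i Hi). destruct Hq as [->| ->].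
      * rewrite <- (padd_zero p' d). apply Hseg. lia.
      * apply Hseg. lia.
    + destruct A2 as [p' [d [k [_ [[[Hk Hseg] _] [t [Ht ->]]]]]]].
      apply (curve_X X n V C HV i Hi). apply Hseg. lia.
  - intros f Hf HA x Hx.
    destruct (classic (exists i, (i < n)%nat /\ V i x)) as [[i [Hi Hvx]]|N].
    + exact (V_fixed X n V C HV f Hf HA i Hi x Hvx).
    + apply HA. left. auto.
Qed.
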